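(* For every integer $n\ge0$, the Zernike polynomials $Z^{n,0},\dots,Z^{n,n}$ satisfy the first-order system $$\frac{\partial Z^{n,n}}{\partial z}=0,\qquad \frac{\partial Z^{n,k}}{\partial \bar z}+\frac{\partial Z^{n,k-1}}{\partial z}=0\ \ (k=1,\dots,n),\qquad \frac{\partial Z^{n,0}}{\partial \bar z}=0,$$ and the boundary conditions $Z^{n,k}(t,\bar t)=(-1)^k t^{\,n-2k}$ for all $|t|=1$ and $k=0,1,\dots,n$.
   Context: Identify $\mathbb R^2$ with $\mathbb C$ via $z=x^1+ix^2$, $\bar z=x^1-ix^2$, and use $\frac{\partial}{\partial z}=\frac12\big(\frac{\partial}{\partial x^1}-i\frac{\partial}{\partial x^2}\big)$, $\frac{\partial}{\partial \bar z}=\frac12\big(\frac{\partial}{\partial x^1}+i\frac{\partial}{\partial x^2}\big)$. Zernike polynomials (in the paper's numbering) are defined for integers $n\ge 0$, $0\le k\le n$ by $$Z^{n,k}(z,\bar z)=\sum_{s=0}^{k}\binom{k}{s}\binom{n-k}{s}z^{n-k-s}(1-z\bar z)^s(-\bar z)^{k-s}\quad\text{for }0\le k\le [n/2],$$ and $Z^{n,k}=(-1)^n\,\overline{Z^{n,n-k}}$ for $[n/2]<k\le n$, where $[\cdot]$ is the integer part. *)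

(* Defs.v *)
From Stdlib Require Import Reals Arith.
From Coquelicot Require Import Coquelicot.
Open Scope R_scope.

Definition CC := Complex.C.

Fixpoint cpow (w : CC) (m : nat) : CC :=
  match m with O => RtoC 1 | S m' => Cmult w (cpow w m') end.

Fixpoint csum (f : nat -> CC) (k : nat) : CC :=
  match k with O => f O | S k' => Cplus (csum f k') (f k) end.

Definition binom (n k : nat) : R :=
  if Nat.leb k n then Binomial.C n k else 0.

Definition Zlow (n k : nat) (z : CC) : CC :=
  csum (fun s =>
    Cmult (RtoC (binom k s * binom (n - k) s))
      (Cmult (cpow z (n - k - s))
        (Cmult (cpow (Cminus (RtoC 1) (Cmult z (Cconj z))) s)
               (cpow (Copp (Cconj z)) (k - s))))) k.

Definition Zernike (n k : nat) (z : CC) : CC :=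
  if Nat.leb k (Nat.div2 n) then Zlow n k z
  else Cmult (RtoC ((-1) ^ n)) (Cconj (Zlow n (n - k) z)).

Definition d1 (f : CC -> CC) (x1 x2 : R) : CC :=
  (Derive (fun t => fst (f (t, x2))) x1, Derive (fun t => snd (f (t, x2))) x1).
Definition d2 (f : CC -> CC) (x1 x2 : R) : CC :=
  (Derive (fun t => fst (f (x1, t))) x2, Derive (fun t => snd (f (x1, t))) x2).

Definition dz (f : CC -> CC) (x1 x2 : R) : CC :=
  Cmult (RtoC (/ 2)) (Cminus (d1 f x1 x2) (Cmult Ci (d2 f x1 x2))).
Definition dzbar (f : CC -> CC) (x1 x2 : R) : CC :=
  Cmult (RtoC (/ 2)) (Cplus (d1 f x1 x2) (Cmult Ci (d2 f x1 x2))).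

(* t^m for integer exponent m (t <> 0 on the unit circle) *)
Definition cpowZ (t : CC) (m : Z) : CC :=
  if (0 <=? m)%Z then cpow t (Z.to_nat m) else Cinv (cpow t (Z.to_nat (- m))).

(* Main.v *)
Require Import Defs.
From Stdlib Require Import Reals Arith ZArith Lia Lra.
From Coquelicot Require Import Coquelicot.
Open Scope R_scope.
Lemma eqC_intro (a b : C) : Cplus a (RtoC 0) = Cplus b (RtoC 0) -> a = b.
Proof. intros H. destruct a, b. unfold Cplus, RtoC in H; simpl in H. injection H; intros. f_equal; lra. Qed.
Ltac cring := try match goal with |- @eq CC _ _ => apply eqC_intro end; ring.

Lemma dR_plus f g x df dg : is_derive f x df -> is_derive g x dg -> is_derive (fun t => f t + g t) x (df+dg).
Proof. intros H1 H2. exact (is_derive_plus f g x df dg H1 H2). Qed.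
Lemma dR_minus f g x df dg : is_derive f x df -> is_derive g x dg -> is_derive (fun t => f t - g t) x (df-dg).
Proof. intros H1 H2. exact (is_derive_minus f g x df dg H1 H2). Qed.
Lemma dR_mult f g x df dg : is_derive f x df -> is_derive g x dg -> is_derive (fun t => f t * g t) x (df * g x + f x * dg).
Proof. intros H1 H2. exact (is_derive_mult f g x df dg H1 H2 Rmult_comm). Qed.
Lemma dR_opp f x df : is_derive f x df -> is_derive (fun t => - f t) x (- df).
Proof. intros H1. exact (is_derive_opp f x df H1). Qed.
Lemma dR_const (a x : R) : is_derive (fun _ => a) x 0.
Proof. exact (@is_derive_const R_AbsRing R_NormedModule a x). Qed.
Lemma dR_id (x : R) : is_derive (fun t => t) x 1.
Proof. exact (@is_derive_id R_AbsRing x). Qed.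
Lemma dR_eq (f : R -> R) (x d d' : R) : is_derive f x d -> d = d' -> is_derive f x d'.
Proof. intros H ->; exact H. Qed.

Definition pd (g : R -> C) (x : R) (d : C) : Prop :=
  is_derive (fun t => fst (g t)) x (fst d) /\ is_derive (fun t => snd (g t)) x (snd d).

Lemma pd_eq g x d d' : pd g x d -> d = d' -> pd g x d'.
Proof. intros H ->; exact H. Qed.

Lemma pd_plus g h x dg dh : pd g x dg -> pd h x dh ->
  pd (fun t => Cplus (g t) (h t)) x (Cplus dg dh).
Proof. intros [A B] [C D]; split; simpl; apply dR_plus; auto. Qed.

Lemma pd_mult g h x dg dh : pd g x dg -> pd h x dh ->
  pd (fun t => Cmult (g t) (h t)) x (Cplus (Cmult dg (h x)) (Cmult (g x) dh)).
Proof.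
  intros [A B] [C D]; split; simpl.
  - eapply dR_eq. apply dR_minus; apply dR_mult; eauto. cbv beta; ring.
  - eapply dR_eq. apply dR_plus; apply dR_mult; eauto. cbv beta; ring.
Qed.

Lemma pd_const (c : C) x : pd (fun _ => c) x (RtoC 0).
Proof. split; simpl; apply dR_const. Qed.

Lemma pd_conj g x dg : pd g x dg -> pd (fun t => Cconj (g t)) x (Cconj dg).
Proof. intros [A B]; split; simpl; auto. apply dR_opp; auto. Qed.

Definition W (f a b : C -> C) : Prop := forall x1 x2 : R,
  pd (fun t => f (t, x2)) x1 (Cplus (a (x1, x2)) (b (x1, x2))) /\
  pd (fun t => f (x1, t)) x2 (Cmult Ci (Cminus (a (x1, x2)) (b (x1, x2)))).

Lemma W_eq f a b a' b' : W f a b -> (forall z, a z = a' z) -> (forall z, b z = b' z) -> W f a' b'.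
Proof. intros H Ha Hb x1 x2. rewrite <- Ha, <- Hb. apply H. Qed.

Lemma W_plus f g af bf ag bg : W f af bf -> W g ag bg ->
  W (fun z => Cplus (f z) (g z)) (fun z => Cplus (af z) (ag z)) (fun z => Cplus (bf z) (bg z)).
Proof.
  intros H1 H2 x1 x2. destruct (H1 x1 x2) as [A B]; destruct (H2 x1 x2) as [C D]; split.
  - eapply pd_eq. apply pd_plus; eauto. cbv beta; ring.
  - eapply pd_eq. apply pd_plus; eauto. cbv beta; unfold Cminus; ring.
Qed.

Lemma W_mult f g af bf ag bg : W f af bf -> W g ag bg ->
  W (fun z => Cmult (f z) (g z))
    (fun z => Cplus (Cmult (af z) (g z)) (Cmult (f z) (ag z)))
    (fun z => Cplus (Cmult (bf z) (g z)) (Cmult (f z) (bg z))).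
Proof.
  intros H1 H2 x1 x2. destruct (H1 x1 x2) as [A B]; destruct (H2 x1 x2) as [C D]; split.
  - eapply pd_eq. apply pd_mult; eauto. cbv beta; ring.
  - eapply pd_eq. apply pd_mult; eauto. cbv beta; unfold Cminus; ring.
Qed.

Lemma W_const (c : C) : W (fun _ => c) (fun _ => RtoC 0) (fun _ => RtoC 0).
Proof. intros x1 x2; split; eapply pd_eq; try apply pd_const; unfold Cminus; ring. Qed.

Lemma W_id : W (fun z => z) (fun _ => RtoC 1) (fun _ => RtoC 0).
Proof.
  intros x1 x2; split; split; simpl.
  - eapply dR_eq. apply dR_id. cbv beta; ring.
  - eapply dR_eq. apply dR_const. ring.
  - eapply dR_eq. apply dR_const. ring.
  - eapply dR_eq. apply dR_id. cbv beta; ring.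
Qed.

Lemma W_conj : W (fun z => Cconj z) (fun _ => RtoC 0) (fun _ => RtoC 1).
Proof.
  intros x1 x2; split; split; simpl.
  - eapply dR_eq. apply dR_id. cbv beta; ring.
  - eapply dR_eq. apply dR_opp, dR_const. ring.
  - eapply dR_eq. apply dR_const. ring.
  - eapply dR_eq. apply dR_opp, dR_id. ring.
Qed.

Lemma d1_W f a b x1 x2 : W f a b -> Defs.d1 f x1 x2 = Cplus (a (x1, x2)) (b (x1, x2)).
Proof.
  intros H. destruct (H x1 x2) as [[A1 A2] _]. unfold Defs.d1.
  rewrite (surjective_pairing (Cplus _ _)). f_equal; apply is_derive_unique; assumption.
Qed.
Lemma d2_W f a b x1 x2 : W f a b -> Defs.d2 f x1 x2 = Cmult Ci (Cminus (a (x1, x2)) (b (x1, x2))).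
Proof.
  intros H. destruct (H x1 x2) as [_ [A1 A2]]. unfold Defs.d2.
  rewrite (surjective_pairing (Cmult _ _)). f_equal; apply is_derive_unique; assumption.
Qed.

Lemma W_dz f a b x1 x2 : W f a b -> dz f x1 x2 = a (x1, x2).
Proof.
  intros H. unfold dz. rewrite (d1_W _ _ _ _ _ H), (d2_W _ _ _ _ _ H).
  destruct (a (x1, x2)) as [p q], (b (x1, x2)) as [r s].
  unfold Cmult, Cminus, Cplus, Copp, RtoC, Ci; simpl. f_equal; field.
Qed.

Lemma W_dzbar f a b x1 x2 : W f a b -> dzbar f x1 x2 = b (x1, x2).
Proof.
  intros H. unfold dzbar. rewrite (d1_W _ _ _ _ _ H), (d2_W _ _ _ _ _ H).
  destruct (a (x1, x2)) as [p q], (b (x1, x2)) as [r s].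
  unfold Cmult, Cminus, Cplus, Copp, RtoC, Ci; simpl. f_equal; field.
Qed.

Lemma pd_ext g h x d : (forall t, g t = h t) -> pd g x d -> pd h x d.
Proof.
  intros E [A B]; split.
  - eapply is_derive_ext; [|exact A]. intros t; simpl; now rewrite E.
  - eapply is_derive_ext; [|exact B]. intros t; simpl; now rewrite E.
Qed.

Lemma W_fext f g a b : (forall z, f z = g z) -> W f a b -> W g a b.
Proof.
  intros E H x1 x2. destruct (H x1 x2) as [A B]. split.
  - apply (pd_ext (fun t => f (t, x2))); [intros t; apply E|exact A].
  - apply (pd_ext (fun t => f (x1, t))); [intros t; apply E|exact B].
Qed.

Lemma W_opp f a b : W f a b -> W (fun z => Copp (f z)) (fun z => Copp (a z)) (fun z => Copp (b z)).
Proof.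
  intros H. eapply W_fext; [|eapply W_eq; [apply (W_mult _ _ _ _ _ _ (W_const (RtoC (-1))) H)| |]].
  - intros z; simpl. ring.
  - intros z; simpl. ring.
  - intros z; simpl. ring.
Qed.

Lemma cpow_S w m : cpow w (S m) = Cmult w (cpow w m).
Proof. reflexivity. Qed.

Lemma RtoC_INR_S p : RtoC (INR (S p)) = Cplus (RtoC (INR p)) (RtoC 1).
Proof. rewrite S_INR. unfold RtoC, Cplus; simpl. f_equal; ring. Qed.

Lemma W_cpow f a b p : W f a b ->
  W (fun z => cpow (f z) p)
    (fun z => Cmult (Cmult (RtoC (INR p)) (cpow (f z) (p - 1))) (a z))
    (fun z => Cmult (Cmult (RtoC (INR p)) (cpow (f z) (p - 1))) (b z)).
Proof.
  intros H. induction p as [|p IH].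
  - eapply W_eq. apply (W_const (RtoC 1)).
    + intros z; simpl. ring.
    + intros z; simpl. ring.
  - eapply W_eq. apply (W_mult _ _ _ _ _ _ H IH).
    + intros z. rewrite RtoC_INR_S. replace (S p - 1)%nat with p by lia.
      destruct p as [|p]; simpl; [ring|].
      replace (p - 0)%nat with p by lia. ring.
    + intros z. rewrite RtoC_INR_S. replace (S p - 1)%nat with p by lia.
      destruct p as [|p]; simpl; [ring|].
      replace (p - 0)%nat with p by lia. ring.
Qed.

Lemma W_csum (F A B : nat -> C -> C) k :
  (forall s, W (F s) (A s) (B s)) ->
  W (fun z => csum (fun s => F s z) k) (fun z => csum (fun s => A s z) k) (fun z => csum (fun s => B s z) k).
Proof.
  intros H. induction k as [|k IH]; simpl.
  - apply H.
  - apply (W_plus _ _ _ _ _ _ IH (H (S k))).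
Qed.

Definition U (z : C) : C := Cminus (RtoC 1) (Cmult z (Cconj z)).
Definition V (z : C) : C := Copp (Cconj z).

Lemma W_U : W U V (fun z => Copp z).
Proof.
  eapply W_fext; [|eapply W_eq; [apply (W_plus _ _ _ _ _ _ (W_const (RtoC 1)) (W_opp _ _ _ (W_mult _ _ _ _ _ _ W_id W_conj)))| |]].
  - intros z. reflexivity.
  - intros z. cbv beta; unfold V; ring.
  - intros z. cbv beta; ring.
Qed.

Lemma W_V : W V (fun _ => RtoC 0) (fun _ => RtoC (-1)).
Proof.
  eapply W_eq. apply (W_opp _ _ _ W_conj).
  - intros z; simpl. unfold Copp, RtoC; simpl. f_equal; ring.
  - intros z; simpl. unfold Copp, RtoC; simpl. f_equal; ring.
Qed.

Definition Aco (n k s : nat) : R := binom k s * binom (n - k) s.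

Definition ta (n k s : nat) (z : C) : C :=
  Cmult (RtoC (Aco n k s))
   (Cplus (Cmult (Cmult (RtoC (INR (n - k - s))) (cpow z (n - k - s - 1))) (Cmult (cpow (U z) s) (cpow (V z) (k - s))))
          (Cmult (cpow z (n - k - s)) (Cmult (Cmult (Cmult (RtoC (INR s)) (cpow (U z) (s - 1))) (V z)) (cpow (V z) (k - s))))).

Definition tb (n k s : nat) (z : C) : C :=
  Cmult (RtoC (Aco n k s))
   (Cmult (cpow z (n - k - s))
     (Cplus (Cmult (Cmult (Cmult (RtoC (INR s)) (cpow (U z) (s - 1))) (Copp z)) (cpow (V z) (k - s)))
            (Cmult (cpow (U z) s) (Cmult (Cmult (RtoC (INR (k - s))) (cpow (V z) (k - s - 1))) (RtoC (-1)))))).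

Lemma W_Zlow n k : W (Zlow n k) (fun z => csum (fun s => ta n k s z) k) (fun z => csum (fun s => tb n k s z) k).
Proof.
  apply (W_fext (fun z => csum (fun s => Cmult (RtoC (Aco n k s)) (Cmult (cpow z (n - k - s)) (Cmult (cpow (U z) s) (cpow (V z) (k - s))))) k)).
  { intros z. reflexivity. }
  apply (W_csum (fun s z => Cmult (RtoC (Aco n k s)) (Cmult (cpow z (n - k - s)) (Cmult (cpow (U z) s) (cpow (V z) (k - s)))))
                (fun s z => ta n k s z) (fun s z => tb n k s z)).
  intros s. eapply W_eq.
  - apply (W_mult _ _ _ _ _ _ (W_const _) (W_mult _ _ _ _ _ _ (W_cpow _ _ _ (n - k - s) W_id)
            (W_mult _ _ _ _ _ _ (W_cpow _ _ _ s W_U) (W_cpow _ _ _ (k - s) W_V)))).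
  - intros z. unfold ta. cbv beta. ring.
  - intros z. unfold tb. cbv beta. ring.
Qed.

Lemma csum_ext f g k : (forall s, (s <= k)%nat -> f s = g s) -> csum f k = csum g k.
Proof.
  induction k as [|k IH]; intros H; simpl.
  - apply H; lia.
  - rewrite IH by (intros; apply H; lia). rewrite H by lia. reflexivity.
Qed.

Lemma csum_plus f g k : csum (fun s => Cplus (f s) (g s)) k = Cplus (csum f k) (csum g k).
Proof. induction k as [|k IH]; cbn [csum]; [reflexivity|]. rewrite IH. cring. Qed.

Lemma csum_zero f k : (forall s, (s <= k)%nat -> f s = RtoC 0) -> csum f k = RtoC 0.
Proof.
  induction k as [|k IH]; intros H; simpl.
  - apply H; lia.
  - rewrite IH by (intros; apply H; lia). rewrite H by lia. cring.
Qed.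

Lemma csum_shift f k : csum f (S k) = Cplus (f O) (csum (fun s => f (S s)) k).
Proof.
  induction k as [|k IH].
  - reflexivity.
  - change (csum f (S (S k))) with (Cplus (csum f (S k)) (f (S (S k)))).
    rewrite IH. simpl. cring.
Qed.

Lemma csum_conj f k : Cconj (csum f k) = csum (fun s => Cconj (f s)) k.
Proof.
  induction k as [|k IH]; simpl; [reflexivity|]. rewrite <- IH.
  unfold Cconj, Cplus; simpl. f_equal; cring.
Qed.

Lemma csum_extend f k d : (forall s, (k < s <= k + d)%nat -> f s = RtoC 0) -> csum f (k + d) = csum f k.
Proof.
  induction d as [|d IH]; intros H.
  - now rewrite Nat.add_0_r.
  - rewrite Nat.add_succ_r. simpl. rewrite IH by (intros; apply H; lia).
    rewrite H by lia. cring.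
Qed.

Lemma binom_gt n k : (n < k)%nat -> binom n k = 0.
Proof. intros H. unfold binom. destruct (Nat.leb_spec k n); [lia|reflexivity]. Qed.

Lemma binom_le n k : (k <= n)%nat -> binom n k = Binomial.C n k.
Proof. intros H. unfold binom. destruct (Nat.leb_spec k n); [reflexivity|lia]. Qed.

Lemma binom_0 n : binom n 0 = 1.
Proof. rewrite binom_le by lia. unfold Binomial.C. rewrite Nat.sub_0_r. simpl. field. apply INR_fact_neq_0. Qed.

Lemma C_nn n : Binomial.C n n = 1.
Proof. unfold Binomial.C. rewrite Nat.sub_diag. simpl. field. apply INR_fact_neq_0. Qed.

Lemma binom_pascal K s : binom K (S s) + binom K s = binom (S K) (S s).
Proof.
  destruct (Nat.lt_ge_cases s K) as [H|H].
  - rewrite !binom_le by lia. rewrite Rplus_comm. apply pascal. exact H.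
  - destruct (Nat.eq_dec s K) as [->|H'].
    + rewrite binom_gt by lia. rewrite !binom_le by lia. rewrite !C_nn. cring.
    + rewrite !binom_gt by lia. cring.
Qed.

Lemma binom_L1 x s : INR (S s) * binom (S x) (S s) = INR (S x) * binom x s.
Proof.
  destruct (Nat.le_gt_cases s x) as [H|H].
  - rewrite !binom_le by lia. unfold Binomial.C.
    replace (S x - S s)%nat with (x - s)%nat by lia.
    change (fact (S x)) with (S x * fact x)%nat. change (fact (S s)) with (S s * fact s)%nat.
    rewrite !mult_INR. field; repeat split; (apply INR_fact_neq_0 || (apply not_0_INR; lia)).
  - rewrite !binom_gt by lia. ring.
Qed.

Lemma binom_L3 x s : INR (S x - s) * binom (S x) s = INR (S x) * binom x s.
Proof.
  destruct (Nat.le_gt_cases s x) as [H|H].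
  - rewrite !binom_le by lia. unfold Binomial.C.
    replace (S x - s)%nat with (S (x - s)) by lia.
    change (fact (S x)) with (S x * fact x)%nat. change (fact (S (x - s))) with (S (x - s) * fact (x - s))%nat.
    rewrite !mult_INR. field; repeat split; (apply INR_fact_neq_0 || (apply not_0_INR; lia)).
  - rewrite (binom_gt x s) by lia. destruct (Nat.eq_dec s (S x)) as [->|H'].
    + rewrite Nat.sub_diag. simpl. ring.
    + rewrite binom_gt by lia. ring.
Qed.

Lemma coef_id m K s :
  INR (S s) * (binom K (S s) * binom (S m) (S s) - binom (S K) (S s) * binom m (S s))
  + (INR (S m - s) * (binom K s * binom (S m) s) - INR (S K - s) * (binom (S K) s * binom m s)) = 0.
Proof.
  pose proof (binom_L1 m s) as h1. pose proof (binom_L1 K s) as h2.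
  pose proof (binom_L3 m s) as h3. pose proof (binom_L3 K s) as h4.
  pose proof (binom_pascal K s) as p1. pose proof (binom_pascal m s) as p2.
  replace (INR (S s) * (binom K (S s) * binom (S m) (S s) - binom (S K) (S s) * binom m (S s))
  + (INR (S m - s) * (binom K s * binom (S m) s) - INR (S K - s) * (binom (S K) s * binom m s)))
  with (binom K (S s) * (INR (S s) * binom (S m) (S s)) - binom m (S s) * (INR (S s) * binom (S K) (S s))
     + binom K s * (INR (S m - s) * binom (S m) s) - binom m s * (INR (S K - s) * binom (S K) s)) by ring.
  rewrite h1, h2, h3, h4.
  replace (binom K (S s) * (INR (S m) * binom m s) - binom m (S s) * (INR (S K) * binom K s) +
    binom K s * (INR (S m) * binom m s) - binom m s * (INR (S K) * binom K s))
  with (INR (S m) * binom m s * (binom K (S s) + binom K s) - INR (S K) * binom K s * (binom m (S s) + binom m s)) by ring.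
  rewrite p1, p2.
  apply (Rmult_eq_reg_l (INR (S s))); [|apply not_0_INR; lia].
  replace (INR (S s) * (INR (S m) * binom m s * binom (S K) (S s) - INR (S K) * binom K s * binom (S m) (S s)))
    with (INR (S m) * binom m s * (INR (S s) * binom (S K) (S s)) - INR (S K) * binom K s * (INR (S s) * binom (S m) (S s))) by ring.
  rewrite h1, h2. ring.
Qed.

Definition As m K s := binom (S K) s * binom m s.
Definition Bs m K s := binom K s * binom (S m) s.
Definition Tt m K s z := Cmult (cpow z (m - s)) (Cmult (cpow (U z) s) (cpow (V z) (K - s))).
Definition Pt m K s z := Cmult (Cmult (RtoC (INR s)) (Cminus (RtoC (Bs m K s)) (RtoC (As m K s))))
   (Cmult (cpow z (S m - s)) (Cmult (cpow (U z) (s - 1)) (cpow (V z) (S K - s)))).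
Definition Rt m K s := Cminus (Cmult (RtoC (INR (S m - s))) (RtoC (Bs m K s)))
   (Cmult (RtoC (INR (S K - s))) (RtoC (As m K s))).

Lemma RtoC_0 : forall x, x = 0 -> RtoC x = RtoC 0.
Proof. intros x ->; reflexivity. Qed.

Lemma term_id n m K s z : (n - S K = m)%nat -> (n - K = S m)%nat -> (s <= S K)%nat ->
  Cplus (tb n (S K) s z) (ta n K s z) = Cplus (Pt m K s z) (Cmult (Rt m K s) (Tt m K s z)).
Proof.
  intros H1 H2 Hs. unfold tb, ta, Aco, Pt, Rt, Tt, As, Bs. rewrite H1, H2.
  destruct (Nat.eq_dec s (S K)) as [->|Hs'].
  - rewrite Nat.sub_diag. rewrite (binom_gt K (S K)) by lia.
    rewrite (RtoC_0 (0 * binom (S m) (S K))) by ring.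
    replace (S K - 1)%nat with K by lia.
    destruct (Nat.le_gt_cases (S K) m) as [Hm|Hm].
    + replace (S m - S K)%nat with (S (m - S K)) by lia. rewrite (cpow_S z (m - S K)).
      change (INR 0) with 0. cring.
    + rewrite (binom_gt m (S K)) by lia. rewrite (RtoC_0 (binom (S K) (S K) * 0)) by ring.
      change (INR 0) with 0. cring.
  - replace (S K - s - 1)%nat with (K - s)%nat by lia.
    replace (S K - s)%nat with (S (K - s))%nat by lia.
    replace (S m - s - 1)%nat with (m - s)%nat by lia.
    rewrite (cpow_S (V z) (K - s)).
    destruct (Nat.le_gt_cases s m) as [Hm|Hm].
    + replace (S m - s)%nat with (S (m - s))%nat by lia. rewrite (cpow_S z (m - s)). cring.
    + rewrite (binom_gt m s) by lia. rewrite (RtoC_0 (binom (S K) s * 0)) by ring. cring.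
Qed.

Lemma coef_C (a b c d e f g : R) (T : C) :
  Cplus (Cmult (Cmult (RtoC a) (Cminus (RtoC b) (RtoC c))) T)
        (Cmult (Cminus (Cmult (RtoC d) (RtoC e)) (Cmult (RtoC f) (RtoC g))) T)
  = Cmult (RtoC (a * (b - c) + (d * e - f * g))) T.
Proof. destruct T as [p q]. unfold RtoC, Cmult, Cminus, Cplus, Copp; simpl. f_equal; ring. Qed.

Lemma main_id n K z : (S K <= n)%nat ->
  Cplus (csum (fun s => tb n (S K) s z) (S K)) (csum (fun s => ta n K s z) K) = RtoC 0.
Proof.
  intros Hn. set (m := (n - S K)%nat).
  assert (H1 : (n - S K)%nat = m) by reflexivity.
  assert (H2 : (n - K)%nat = S m) by (unfold m; lia).
  rewrite <- (csum_extend (fun s => ta n K s z) K 1).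
  2:{ intros s Hs. replace s with (S K) by lia. unfold ta, Aco.
      rewrite (binom_gt K (S K)) by lia. rewrite (RtoC_0 (0 * binom (n - K) (S K))) by ring. cring. }
  replace (K + 1)%nat with (S K) by lia.
  rewrite <- csum_plus.
  rewrite (csum_ext _ (fun s => Cplus (Pt m K s z) (Cmult (Rt m K s) (Tt m K s z))))
    by (intros s Hs; apply term_id; auto).
  rewrite csum_plus. rewrite (csum_shift (fun s => Pt m K s z)).
  change (csum (fun s => Cmult (Rt m K s) (Tt m K s z)) (S K)) with
    (Cplus (csum (fun s => Cmult (Rt m K s) (Tt m K s z)) K) (Cmult (Rt m K (S K)) (Tt m K (S K) z))).
  assert (E0 : Pt m K 0 z = RtoC 0).
  { unfold Pt. change (INR 0) with 0. cring. }
  assert (E1 : Rt m K (S K) = RtoC 0).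
  { unfold Rt, Bs. rewrite (binom_gt K (S K)) by lia. rewrite Nat.sub_diag.
    change (INR 0) with 0. rewrite (RtoC_0 (0 * binom (S m) (S K))) by ring. cring. }
  rewrite E0, E1.
  assert (E2 : Cplus (csum (fun s => Pt m K (S s) z) K) (csum (fun s => Cmult (Rt m K s) (Tt m K s z)) K) = RtoC 0).
  { rewrite <- csum_plus. apply csum_zero. intros s Hs.
    unfold Pt, Tt. simpl (S m - S s)%nat. simpl (S K - S s)%nat. replace (S s - 1)%nat with s by lia.
    fold (Tt m K s z). unfold Rt. rewrite coef_C. unfold As, Bs.
    rewrite (coef_id m K s). cring. }
  transitivity (Cplus (csum (fun s => Pt m K (S s) z) K) (csum (fun s => Cmult (Rt m K s) (Tt m K s z)) K)); [|exact E2]. cring.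
Qed.

Lemma Cconj_mult' a b : Cconj (Cmult a b) = Cmult (Cconj a) (Cconj b).
Proof. destruct a, b. unfold Cconj, Cmult; simpl. f_equal; ring. Qed.
Lemma Cconj_RtoC' r : Cconj (RtoC r) = RtoC r.
Proof. unfold Cconj, RtoC; simpl. f_equal; ring. Qed.
Lemma Cconj_invol a : Cconj (Cconj a) = a.
Proof. destruct a. unfold Cconj; simpl. f_equal; ring. Qed.
Lemma cpow_conj x p : Cconj (cpow x p) = cpow (Cconj x) p.
Proof. induction p; simpl. apply Cconj_RtoC'. rewrite Cconj_mult', IHp. reflexivity. Qed.
Lemma U_conj z : Cconj (U z) = U z.
Proof. destruct z. unfold U, Cconj, Cminus, Cmult, Cplus, Copp, RtoC; simpl. f_equal; ring. Qed.
Lemma V_conj z : Cconj (V z) = Copp z.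
Proof. destruct z. unfold V, Cconj, Copp; simpl. f_equal; ring. Qed.
Lemma cpow_opp x p : cpow (Copp x) p = Cmult (RtoC ((-1) ^ p)) (cpow x p).
Proof.
  induction p; simpl. cring. rewrite IHp.
  replace (RtoC (-1 * (-1) ^ p)) with (Cmult (RtoC (-1)) (RtoC ((-1)^p))) by (unfold RtoC, Cmult; simpl; f_equal; ring).
  cring.
Qed.
Lemma cpow_add x a b : cpow x (a + b) = Cmult (cpow x a) (cpow x b).
Proof. induction a; simpl. cring. rewrite IHa. cring. Qed.
Lemma cpow_mul2 x y p : cpow (Cmult x y) p = Cmult (cpow x p) (cpow y p).
Proof. induction p; simpl. cring. rewrite IHp. cring. Qed.
Lemma cpow_one p : cpow (RtoC 1) p = RtoC 1.
Proof. induction p; simpl. reflexivity. rewrite IHp. cring. Qed.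
Lemma cpow_zero p : cpow (RtoC 0) (S p) = RtoC 0.
Proof. simpl. cring. Qed.
Lemma RtoC_mult' a b : RtoC (a * b) = Cmult (RtoC a) (RtoC b).
Proof. unfold RtoC, Cmult; simpl. f_equal; ring. Qed.
Lemma m1sq n : (-1) ^ n * (-1) ^ n = 1.
Proof. induction n; simpl. ring. nra. Qed.

Lemma csum_scal c f k : Cmult c (csum f k) = csum (fun s => Cmult c (f s)) k.
Proof. induction k; cbn [csum]. reflexivity. rewrite <- IHk. cring. Qed.

Lemma csum_tail f k d : (forall s, (k < s)%nat -> f s = RtoC 0) -> csum f (k + d) = csum f k.
Proof. intros H. apply csum_extend. intros; apply H; lia. Qed.

Lemma Zlow_sym n k z : (k <= n)%nat ->
  Zlow n k z = Cmult (RtoC ((-1) ^ n)) (Cconj (Zlow n (n - k) z)).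
Proof.
  intros Hk. set (j := (n - k)%nat).
  assert (Hj : (n - j = k)%nat) by (unfold j; lia).
  unfold Zlow. rewrite csum_conj, csum_scal.
  rewrite Hj.
  rewrite <- (csum_tail _ k j), <- (csum_tail _ j k).
  2:{ intros s Hs. rewrite (binom_gt j s) by lia. rewrite Rmult_0_l. rewrite Cconj_mult', Cconj_RtoC'. cring. }
  2:{ intros s Hs. rewrite (binom_gt k s) by lia. rewrite Rmult_0_l. cring. }
  rewrite Nat.add_comm. apply csum_ext. intros s Hs.
  fold (U z). fold (V z).
  destruct (Nat.le_gt_cases s k) as [Hsk|Hsk]; [destruct (Nat.le_gt_cases s j) as [Hsj|Hsj]|].
  - rewrite !Cconj_mult', Cconj_RtoC', !cpow_conj, U_conj, V_conj.
    unfold V. rewrite !cpow_opp.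
    replace (n - k - s)%nat with (j - s)%nat by (unfold j; lia).
    change (n - k)%nat with j.
    replace ((-1) ^ n) with ((-1) ^ (j - s) * (-1) ^ (k - s) * ((-1) ^ s * (-1) ^ s))
      by (rewrite <- !pow_add; f_equal; unfold j; lia).
    rewrite m1sq.
    rewrite !RtoC_mult'. assert (Ee : Cmult (RtoC ((-1) ^ (j - s))) (RtoC ((-1) ^ (j - s))) = RtoC 1) by (rewrite <- RtoC_mult', m1sq; reflexivity). apply eqC_intro. ring [Ee].
  - change (n - k)%nat with j. rewrite (binom_gt j s) by lia. rewrite ?Rmult_0_r, ?Rmult_0_l.
    rewrite !Cconj_mult', Cconj_RtoC'. rewrite ?Rmult_0_r, ?Rmult_0_l. cring.
  - rewrite (binom_gt k s) by lia. rewrite !Rmult_0_l.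
    rewrite !Cconj_mult', Cconj_RtoC'. rewrite ?Rmult_0_r, ?Rmult_0_l. cring.
Qed.

Lemma Zernike_Zlow n k z : (k <= n)%nat -> Zernike n k z = Zlow n k z.
Proof.
  intros Hk. unfold Zernike. destruct (Nat.leb k (Nat.div2 n)); [reflexivity|].
  rewrite (Zlow_sym n (n - k)) by lia. replace (n - (n - k))%nat with k by lia.
  rewrite Cconj_mult', Cconj_RtoC', Cconj_invol.
  assert (Ee : Cmult (RtoC ((-1) ^ n)) (RtoC ((-1) ^ n)) = RtoC 1) by (rewrite <- RtoC_mult', m1sq; reflexivity).
  apply eqC_intro. ring [Ee].
Qed.

Lemma W_Zernike n k : (k <= n)%nat ->
  W (Zernike n k) (fun z => csum (fun s => ta n k s z) k) (fun z => csum (fun s => tb n k s z) k).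
Proof. intros Hk. apply (W_fext (Zlow n k)). intros z; symmetry; apply Zernike_Zlow; auto. apply W_Zlow. Qed.

Lemma Zlow_circle n k t : Cmod t = 1 ->
  Zlow n k t = Cmult (cpow t (n - k)) (cpow (Copp (Cconj t)) k).
Proof.
  intros Ht.
  assert (HU : U t = RtoC 0).
  { destruct t as [a b]. unfold Cmod in Ht; simpl in Ht.
    assert (E : a * a + b * b = 1).
    { pose proof (sqrt_sqrt (a * (a * 1) + b * (b * 1))) as Q. rewrite Ht in Q. assert (0 <= a * (a * 1) + b * (b * 1)) by nra. specialize (Q H). nra. }
    unfold U, Cminus, Cplus, Cmult, Copp, Cconj, RtoC; simpl. f_equal; nra. }
  unfold Zlow. fold (U t). fold (V t). rewrite HU.
  destruct k as [|k].
  - simpl csum. rewrite binom_0, binom_0, Rmult_1_l. rewrite !Nat.sub_0_r. unfold V.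
    change (cpow (Copp (Cconj t)) 0) with (RtoC 1). cring.
  - rewrite csum_shift. match goal with |- context [csum ?f k] => rewrite (csum_zero f k) end.
    + rewrite binom_0, binom_0, Rmult_1_l. rewrite !Nat.sub_0_r. unfold V.
      change (cpow (RtoC 0) 0) with (RtoC 1). cring.
    + intros s Hs. cbv beta. rewrite cpow_zero. cring.
Qed.

Lemma tt1 t : Cmod t = 1 -> Cmult t (Cconj t) = RtoC 1.
Proof.
  intros Ht. destruct t as [a b]. unfold Cmod in Ht; simpl in Ht.
  assert (E : a * a + b * b = 1).
  { pose proof (sqrt_sqrt (a * (a * 1) + b * (b * 1))) as Q. rewrite Ht in Q.
    assert (0 <= a * (a * 1) + b * (b * 1)) by nra. specialize (Q H). nra. }
  unfold Cmult, Cconj, RtoC; simpl. f_equal; nra.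
Qed.

Lemma inv_char (X Y : C) : Cmult X Y = RtoC 1 -> X = Cinv Y.
Proof.
  intros H. assert (HY : Y <> RtoC 0).
  { intros ->. replace (Cmult X (RtoC 0)) with (RtoC 0) in H by cring.
    injection H. lra. }
  pose proof (Cinv_r Y HY) as E.
  transitivity (Cmult (Cmult X Y) (Cinv Y)).
  - rewrite <- Cmult_assoc. rewrite E. cring.
  - rewrite H. cring.
Qed.

Lemma boundary n k t : (k <= n)%nat -> Cmod t = 1 ->
  Cmult (cpow t (n - k)) (cpow (Copp (Cconj t)) k) =
  Cmult (RtoC ((-1) ^ k)) (cpowZ t (Z.of_nat n - 2 * Z.of_nat k)%Z).
Proof.
  intros Hk Ht. pose proof (tt1 t Ht) as T1.
  rewrite cpow_opp.
  assert (Kk : Cmult (cpow t k) (cpow (Cconj t) k) = RtoC 1) by (rewrite <- cpow_mul2, T1; apply cpow_one).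
  unfold cpowZ. destruct (Z.leb_spec 0 (Z.of_nat n - 2 * Z.of_nat k)) as [H|H].
  - replace (Z.to_nat (Z.of_nat n - 2 * Z.of_nat k)) with (n - 2 * k)%nat by lia.
    replace (n - k)%nat with ((n - 2 * k) + k)%nat by lia. rewrite cpow_add.
    apply eqC_intro. ring [Kk].
  - transitivity (Cmult (RtoC ((-1) ^ k)) (Cmult (cpow t (n - k)) (cpow (Cconj t) k))); [cring|].
    f_equal. apply inv_char.
    replace (Z.to_nat (- (Z.of_nat n - 2 * Z.of_nat k))) with (2 * k - n)%nat by lia.
    transitivity (Cmult (Cmult (cpow t (n - k)) (cpow t (2 * k - n))) (cpow (Cconj t) k)).
    + cring.
    + rewrite <- cpow_add. replace (n - k + (2 * k - n))%nat with k by lia. exact Kk.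
Qed.

Theorem theorem1 (n : nat) :
  (forall x1 x2 : R, dz (Zernike n n) x1 x2 = RtoC 0) /\
  (forall k : nat, (1 <= k <= n)%nat -> forall x1 x2 : R,
     Cplus (dzbar (Zernike n k) x1 x2) (dz (Zernike n (k - 1)) x1 x2) = RtoC 0) /\
  (forall x1 x2 : R, dzbar (Zernike n 0) x1 x2 = RtoC 0) /\
  (forall (k : nat) (t : CC), (k <= n)%nat -> Cmod t = 1 ->
     Zernike n k t =
       Cmult (RtoC ((-1) ^ k)) (cpowZ t (Z.of_nat n - 2 * Z.of_nat k)%Z)).
Proof.
  split; [|split; [|split]].
  - intros x1 x2. rewrite (W_dz _ _ _ x1 x2 (W_Zernike n n (le_n n))).
    apply csum_zero. intros s Hs. unfold ta, Aco. rewrite Nat.sub_diag.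
    destruct s as [|s].
    + change (INR 0) with 0. rewrite !Nat.sub_0_l. change (INR 0) with 0. cring.
    + rewrite (binom_gt 0 (S s)) by lia. rewrite Rmult_0_r. cring.
  - intros k [Hk1 Hk2] x1 x2. destruct k as [|K]; [lia|].
    replace (S K - 1)%nat with K by lia.
    rewrite (W_dzbar _ _ _ x1 x2 (W_Zernike n (S K) Hk2)).
    rewrite (W_dz _ _ _ x1 x2 (W_Zernike n K ltac:(lia))).
    apply main_id. exact Hk2.
  - intros x1 x2. rewrite (W_dzbar _ _ _ x1 x2 (W_Zernike n 0 ltac:(lia))).
    simpl csum. unfold tb. rewrite !Nat.sub_0_l. change (INR 0) with 0. cring.
  - intros k t Hk Ht. rewrite Zernike_Zlow by exact Hk.
    rewrite (Zlow_circle n k t Ht). apply boundary; auto.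
Qed.
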